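(* Let $G$ be a finite group which is an $\mathcal{L}(\operatorname{Aut}(G))$-equational domain. Let $H=\prod_{i\in\mathbb{Z}}G$ be the direct power of $G$ indexed by $\mathbb{Z}$, with elements $(g_i\mid i\in\mathbb{Z})$. For $\phi\in\operatorname{Aut}(G)$ let $f_\phi((g_i\mid i\in\mathbb{Z}))=(\phi(g_i)\mid i\in\mathbb{Z})$, let $\sigma((g_i\mid i\in\mathbb{Z}))=(g_{i+1}\mid i\in\mathbb{Z})$, and let $A\subseteq\operatorname{Aut}(H)$ be the group generated by $\sigma$ and all $f_\phi$, $\phi\in\operatorname{Aut}(G)$. Then the $\mathcal{L}(A)$-group $H$ is $\mathbf{q}_\omega$-compact.
   Context: For a group $K$ and a subgroup $B\subseteq\operatorname{Aut}(K)$, $\mathcal{L}(B)=\{\cdot,{}^{-1},1\}\cup\{\psi\mid\psi\in B\}$ is the group language with a unary function symbol for each $\psi\in B$, interpreted as $\psi$. An $\mathcal{L}(B)$-equation in variables $X=\{x_1,\dots,x_n\}$ is $t(X)=1$ with $t$ an $\mathcal{L}(B)$-term (equivalently a product $\psi_1(x_{i_1}^{\varepsilon_1})\cdots\psi_k(x_{i_k}^{\varepsilon_k})$, $\psi_j\in B$, $\varepsilon_j=\pm1$); an $\mathcal{L}(B)$-system is any set of such equations, and $V_K(S)\subseteq K^n$ is its solution set. $K$ is an $\mathcal{L}(B)$-equational domain if for every $n$ the union of any two subsets of $K^n$ of the form $V_K(S)$ is again of this form. The $\mathcal{L}(B)$-group $K$ is $\mathbf{q}_\omega$-compact if for every $\mathcal{L}(B)$-system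 $S$ and every $\mathcal{L}(B)$-equation $w(X)=1$ with $V_K(S)\subseteq V_K(w(X)=1)$ there is a finite subsystem $S'\subseteq S$ with $V_K(S')\subseteq V_K(w(X)=1)$. *)

(* Defs.v *)
From mathcomp Require Import all_boot all_algebra all_fingroup.
From Stdlib Require List.
Set Implicit Arguments. Unset Strict Implicit. Unset Printing Implicit Defensive.

Inductive term (K : Type) (B : (K -> K) -> Prop) (n : nat) : Type :=
| tVar : 'I_n -> term B n
| tOne : term B n
| tMul : term B n -> term B n -> term B n
| tInv : term B n -> term B n
| tApp : forall psi : K -> K, B psi -> term B n -> term B n.

Section Eval.
Variables (K : Type) (mul : K -> K -> K) (inv : K -> K) (one : K).
Variables (B : (K -> K) -> Prop) (n : nat).

Fixpoint teval (v : 'I_n -> K) (t : term B n) : K :=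
  match t with
  | tVar i => v i
  | tOne => one
  | tMul t1 t2 => mul (teval v t1) (teval v t2)
  | tInv t1 => inv (teval v t1)
  | tApp psi _ t1 => psi (teval v t1)
  end.

Definition solset (S : term B n -> Prop) : ('I_n -> K) -> Prop :=
  fun v => forall t, S t -> teval v t = one.
End Eval.

Definition equational_domain (K : Type) (mul : K -> K -> K) (inv : K -> K)
  (one : K) (B : (K -> K) -> Prop) : Prop :=
  forall (n : nat) (S1 S2 : term B n -> Prop),
    exists S3 : term B n -> Prop,
      forall v, solset mul inv one S3 v <->
                (solset mul inv one S1 v \/ solset mul inv one S2 v).

Definition qomega_compact (K : Type) (mul : K -> K -> K) (inv : K -> K)
  (one : K) (B : (K -> K) -> Prop) : Prop :=
  forall (n : nat) (S : term B n -> Prop) (w : term B n),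
    (forall v, solset mul inv one S v -> teval mul inv one v w = one) ->
    exists s : seq (term B n),
      (forall t, List.In t s -> S t) /\
      (forall v, solset mul inv one (fun t => List.In t s) v ->
                 teval mul inv one v w = one).

Definition AutG (gT : finGroupType) (f : gT -> gT) : Prop :=
  bijective f /\ {morph f : x y / (x * y)%g}.

Definition powZ (gT : finGroupType) := int -> gT.
Definition mulH (gT : finGroupType) (g h : powZ gT) : powZ gT :=
  fun i => (g i * h i)%g.
Definition invH (gT : finGroupType) (g : powZ gT) : powZ gT :=
  fun i => (g i)^-1%g.
Definition oneH (gT : finGroupType) : powZ gT := fun _ => 1%g.

Definition shiftH (gT : finGroupType) (g : powZ gT) : powZ gT :=
  fun i => g (i + 1)%R.
Definition liftH (gT : finGroupType) (phi : gT -> gT) (g : powZ gT) : powZ gT :=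
  fun i => phi (g i).

Inductive genA (gT : finGroupType) : (powZ gT -> powZ gT) -> Prop :=
| genA_shift : genA (@shiftH gT)
| genA_lift : forall phi, AutG phi -> genA (liftH phi)
| genA_id : genA id
| genA_comp : forall f g, genA f -> genA g -> genA (f \o g)
| genA_inv : forall f g, genA f -> cancel f g -> cancel g f -> genA g.

(* Main.v *)
Require Import Defs.
From mathcomp Require Import all_boot all_algebra all_fingroup.
From mathcomp Require Import zify.
From Stdlib Require Import FunctionalExtensionality.
From Stdlib Require Import Classical ClassicalEpsilon.
Set Implicit Arguments. Unset Strict Implicit. Unset Printing Implicit Defensive.
Import GRing.Theory.
Local Open Scope ring_scope.

Lemma genA_form (gT : finGroupType) (f : powZ gT -> powZ gT) : genA f ->
  exists (a : int) (phi psi : gT -> gT), cancel phi psi /\ cancel psi phi /\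
    forall g i, f g i = phi (g (i + a)).
Proof.
elim=> {f}.
- by exists 1, id, id; split=> //.
- move=> phi [[psi c1 c2] _]; exists 0, phi, psi; split=> //; split=> // g i.
  by rewrite addr0.
- by exists 0, id, id; do 2 split=> //; move=> g i; rewrite addr0.
- move=> f g _ [a1 [p1 [q1 [c1 [d1 e1]]]]] _ [a2 [p2 [q2 [c2 [d2 e2]]]]].
  exists (a1 + a2), (p1 \o p2), (q2 \o q1); split; first by move=> x /=; rewrite c1 c2.
  split; first by move=> x /=; rewrite d2 d1.
  by move=> h i /=; rewrite e1 e2 addrA.
- move=> f g _ [a [p [q [c [d e]]]]] fg gf.
  exists (- a), q, p; split=> //; split=> // h i.
  pose h' : powZ gT := fun i => q (h (i - a)).
  have fh' : f h' = h.
    apply: functional_extensionality => k; rewrite e /h' addrK; exact: d.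
  have -> : g h = g (f h') by rewrite fh'.
  by rewrite fg.
Qed.

Lemma teval_shift (gT : finGroupType) n (t : term (@genA gT) n) (v : 'I_n -> powZ gT) (c : int) :
  forall k, teval (@mulH gT) (@invH gT) (@oneH gT) (fun j (k : int) => v j (k + c)) t k
          = teval (@mulH gT) (@invH gT) (@oneH gT) v t (k + c).
Proof.
elim: t => [j||t1 IH1 t2 IH2|t1 IH1|psi Hpsi t1 IH1] k //=.
- by rewrite /mulH IH1 IH2.
- by rewrite /invH IH1.
- have [a [p [q [_ [_ e]]]]] := genA_form Hpsi.
  by rewrite !e IH1 addrAC.
Qed.

Lemma teval_local (gT : finGroupType) n (t : term (@genA gT) n) :
  exists r : nat, forall (v v' : 'I_n -> powZ gT) (i : int),
   (forall j (d : int), (absz d <= r)%N -> v j (i + d) = v' j (i + d)) ->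
   teval (@mulH gT) (@invH gT) (@oneH gT) v t i = teval (@mulH gT) (@invH gT) (@oneH gT) v' t i.
Proof.
elim: t => [j||t1 [r1 IH1] t2 [r2 IH2]|t1 [r1 IH1]|psi Hpsi t1 [r1 IH1]].
- exists 0%N => v v' i H /=; have := H j 0 (leqnn _); by rewrite addr0.
- by exists 0%N.
- exists (maxn r1 r2) => v v' i H /=; rewrite /mulH (IH1 v v') ?(IH2 v v') //.
  + by move=> j d hd; apply: H; lia.
  + by move=> j d hd; apply: H; lia.
- exists r1 => v v' i H /=; by rewrite /invH (IH1 v v').
- have [a [p [q [_ [_ e]]]]] := genA_form Hpsi.
  exists (r1 + absz a)%N => v v' i H /=; rewrite !e (IH1 v v') //.
  move=> j d hd; rewrite -addrA; apply: H; lia.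
Qed.
Lemma fip (T : finType) (X : Type) (x0 : X) (A : X -> T -> Prop) (join : X -> X -> X)
  (Hj : forall x y t, A (join x y) t -> A x t /\ A y t)
  (Hne : forall x, exists t, A x t) : exists t, forall x, A x t.
Proof.
apply: NNPP => Hn.
have Ht : forall t, exists x, ~ A x t.
  move=> t; apply: NNPP => H1; apply: Hn; exists t => x; apply: NNPP => H2.
  by apply: H1; exists x.
have Hl : forall l : seq T, exists x, forall t, t \in l -> ~ A x t.
  elim=> [|t l [x Hx]]; first by exists x0.
  have [y Hy] := Ht t.
  exists (join x y) => t'; rewrite inE => /orP [/eqP -> | Hin] HA.
  - by apply: Hy; case: (Hj _ _ _ HA).
  - by apply: (Hx t' Hin); case: (Hj _ _ _ HA).
have [x Hx] := Hl (enum T).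
have [t Ht'] := Hne x.
by apply: (Hx t); rewrite ?mem_enum.
Qed.

Definition agreeA (gT : finGroupType) n (M : nat) (u v : 'I_n -> powZ gT) :=
  forall j (i : int), (absz i <= M)%N -> u j i = v j i.

Lemma step (gT : finGroupType) n (P : seq (term (@genA gT) n) -> Prop)
  (P0 : P [::]) (Papp : forall l1 l2, P l1 -> P l2 -> P (l1 ++ l2))
  (bad C : ('I_n -> powZ gT) -> Prop) (M : nat) :
  (forall l, P l -> exists v, solset (@mulH gT) (@invH gT) (@oneH gT) (fun t => List.In t l) v
                              /\ bad v /\ C v) ->
  exists u, forall l, P l -> exists v,
     solset (@mulH gT) (@invH gT) (@oneH gT) (fun t => List.In t l) v
     /\ bad v /\ C v /\ agreeA M u v.
Proof.
move=> H.
pose K := (2 * M + 1)%N.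
pose restr (v : 'I_n -> powZ gT) : {ffun 'I_n * 'I_K -> gT} :=
  [ffun p : 'I_n * 'I_K => v p.1 ((nat_of_ord p.2)%:Z - M%:Z)].
pose X := {l | P l}.
pose A (x : X) q := exists v, solset (@mulH gT) (@invH gT) (@oneH gT) (fun t => List.In t (sval x)) v
                              /\ bad v /\ C v /\ restr v = q.
have [q Hq] : exists q, forall x, A x q.
  apply: (@fip _ X (exist _ [::] P0) A (fun x y => exist _ (sval x ++ sval y) (Papp _ _ (svalP x) (svalP y)))).
  - move=> [x Px] [y Py] q [v [Hv [Hb [Hc Hr]]]] /=; split; exists v; (split; last by []);
      move=> t Ht; apply: Hv; apply: List.in_or_app; by [left|right].
  - move=> [x Px]; have [v [Hv [Hb Hc]]] := H x Px; by exists (restr v), v.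
have [u [_ [_ [_ Hu]]]] := Hq (exist _ [::] P0).
exists u => l Pl; have [v [Hv [Hb [Hc Hr]]]] := Hq (exist _ l Pl).
exists v; do 3 split=> //.
move=> j i hi.
have hk : (absz (i + Posz M)%R < K)%N by rewrite /K; lia.
have := congr1 (fun f : {ffun _ -> gT} => f (j, Ordinal hk)) (etrans Hu (esym Hr)).
rewrite !ffunE /=.
have -> : (Posz (absz (i + Posz M)) - Posz M = i :> int)%R by lia.
by [].
Qed.

Theorem lemma5 (gT : finGroupType)
  (HG : equational_domain (fun x y : gT => (x * y)%g) (fun x : gT => x^-1%g) (1%g : gT) (@AutG gT)) :
  qomega_compact (@mulH gT) (@invH gT) (@oneH gT) (@genA gT).
Proof.
move=> n S w Hw.
pose ev := @teval _ (@mulH gT) (@invH gT) (@oneH gT) (@genA gT) n.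
pose Vl (l : seq (term (@genA gT) n)) := solset (@mulH gT) (@invH gT) (@oneH gT) (fun t => List.In t l).
pose P (l : seq (term (@genA gT) n)) := forall t, List.In t l -> S t.
have P0 : P [::] by [].
have Papp : forall l1 l2, P l1 -> P l2 -> P (l1 ++ l2).
  move=> l1 l2 h1 h2 t Ht; case: (List.in_app_or _ _ _ Ht) => ?; [exact: h1|exact: h2].
pose bad (v : 'I_n -> powZ gT) := ev v w 0 <> 1%g.
apply: NNPP => Hn.
have Hbad : forall l, P l -> exists v, Vl l v /\ bad v /\ True.
  move=> l Pl.
  have [v Hv] : exists v, ~ (Vl l v -> ev v w = oneH gT).
    apply: NNPP => H1; apply: Hn; exists l; split=> // v Hv.
    by apply: NNPP => H2; apply: H1; exists v => H3; apply: H2; apply: H3.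
  have Vv : Vl l v by apply: NNPP => H4; apply: Hv => H5; exfalso; apply: H4.
  have [i Hi] : exists i, ev v w i <> 1%g.
    apply: NNPP => H6; apply: Hv => _; apply: functional_extensionality => i.
    by apply: NNPP => H7; apply: H6; exists i.
  exists (fun j (k : int) => v j (k + i)); split; last split=> //.
  - move=> t Ht; apply: functional_extensionality => k.
    by rewrite teval_shift (Vv t Ht).
  - by rewrite /bad /ev teval_shift add0r.
pose good N u := forall l, P l -> exists v, Vl l v /\ bad v /\ agreeA N u v.
have [u0 Hu0] : exists u, good 0%N u.
  have [u Hu] := step P0 Papp 0%N Hbad.
  exists u => l Pl; have [v [? [? [_ ?]]]] := Hu l Pl; by exists v.
have Hext : forall N u, good N u -> exists u', good N.+1 u' /\ agreeA N u u'.
  move=> N u Hu.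
  have [u' Hu'] := @step gT n P P0 Papp bad (agreeA N u) N.+1 Hu.
  exists u'; split.
    move=> l Pl; have [v [? [? [_ ?]]]] := Hu' l Pl; by exists v.
  have [v [_ [_ [h1 h2]]]] := Hu' [::] P0.
  move=> j i hi; rewrite h1 // h2 //; lia.
pose sq := fix sq N := match N with 0%N => u0 | N'.+1 =>
  epsilon (inhabits u0) (fun u' => good N'.+1 u' /\ agreeA N' (sq N') u') end.
have Hsq : forall N, good N (sq N) /\ agreeA N (sq N) (sq N.+1).
  elim=> [|N [IH1 IH2]].
  - split=> //; exact: (epsilon_spec (inhabits u0) _ (Hext 0%N u0 Hu0)).2.
  - have g1 : good N.+1 (sq N.+1) by exact: (epsilon_spec (inhabits u0) _ (Hext N _ IH1)).1.
    split=> //; exact: (epsilon_spec (inhabits u0) _ (Hext N.+1 _ g1)).2.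
have Hmono : forall N M, (N <= M)%N -> agreeA N (sq N) (sq M).
  move=> N M; elim: M => [|M IH] hNM.
  - by have -> : N = 0%N by lia.
  - move: hNM; rewrite leq_eqVlt => /orP [/eqP -> //| h].
    move=> j i hi; rewrite IH; last lia.
      by apply: (Hsq M).2; lia.
    lia.
pose v (j : 'I_n) (i : int) := sq (absz i) j i.
have Hv : forall N, agreeA N v (sq N).
  move=> N j i hi; rewrite /v; exact: Hmono.
have HvS : solset (@mulH gT) (@invH gT) (@oneH gT) S v.
  move=> t St; apply: functional_extensionality => i.
  have [r Hr] := teval_local t.
  have [v' [Hv' [_ Ha]]] := (Hsq (absz i + r)%N).1 [:: t] (fun t' Ht' => match Ht' with or_introl e => eq_ind t (fun x => S x) St t' e | or_intror f => match f with end end).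
  rewrite (Hr v v'); first by rewrite (Hv' t (or_introl erefl)).
  move=> j d hd; rewrite (Hv (absz i + r)%N) ?Ha //; lia.
have := Hw v HvS.
have [R HR] := teval_local w.
have [v' [_ [Hb Ha]]] := (Hsq R).1 [::] P0.
move=> Hwv; apply: Hb; rewrite /ev -(HR v v') ?Hwv //.
move=> j d hd; rewrite add0r (Hv R) ?Ha //.
Qed.
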